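(* Let $\Gamma$ be a countable amenable group and $\alpha\colon\Gamma\curvearrowright X$ an action on a compact, Hausdorff, $0$-dimensional space. Then $b\in T(\alpha)$ is an order unit if and only if $\mu(b)>0$ for every $\mu\in\mathcal M(\alpha)$.
   Context: Clopen type semigroup: let $Y = X\times\mathbb N$, and let $\tilde\Gamma=\Gamma\times\mathfrak S$ ($\mathfrak S$ the permutation group of $\mathbb N$) act on $Y$ by $(\gamma,\sigma)(x,n)=(\alpha(\gamma)x,\sigma(n))$. A clopen $A\subseteq Y$ is bounded if $A\cap(X\times\{n\})=\emptyset$ for all large $n$. Bounded clopen $A,B$ are equidecomposable if there are clopen $A_1,\dots,A_n$ and $\tilde\gamma_i\in\tilde\Gamma$ with $A=\bigsqcup_i A_i$, $B=\bigsqcup_i\tilde\gamma_iA_i$. $T(\alpha)$ is the set of classes $[A]$, with $[A]+[B]=[A'\sqcup B']$ for disjoint representatives; $0=[\emptyset]$. $a\le b$ iff $b=a+c$ for some $c$. $b$ is an order unit if for each $a$ there is $k$ with $a\le kb$. A state is a monoid homomorphism $T(\alpha)\to[0,+\infty]$; $\mathcal M(\alpha)$ is the set of states $\mu$ with $\mu([X\times\{0\}])=1$ (these correspond to $\alpha$-invariant Radon probability measures on $X$). *)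

(* Defs.v *)
From HB Require Import structures.
From mathcomp Require Import all_boot all_order all_algebra.
From mathcomp Require Import all_classical all_reals topology ereal.
From mathcomp Require Import Rstruct Rstruct_topology.

Set Implicit Arguments.
Unset Strict Implicit.
Unset Printing Implicit Defensive.

Import Order.TTheory GRing.Theory Num.Theory.
Local Open Scope classical_set_scope.

Section Defs.

Variable G : groupType.

Definition countable_group : Prop := exists f : G -> nat, injective f.

(* Amenability of a discrete (countable) group via the Følner condition:
   for every finite K and eps > 0 there is a nonempty finite F with
   |kF Δ F| < eps |F| for every k in K.  Finite subsets are given as
   duplicate-free sequences. *)
Definition left_translate (k : G) (F : seq G) : seq G :=
  map (monoid.mul k) F.

Definition symdiff_card (A B : seq G) : nat :=
  count (fun x => x \notin B) A + count (fun x => x \notin A) B.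

Definition amenable_group : Prop :=
  forall (K : seq G) (eps : Rdefinitions.R), (0 < eps)%R ->
    exists F : seq G,
      [/\ uniq F, (0 < size F)%N &
          forall k, k \in K ->
            ((symdiff_card (left_translate k F) F)%:R < eps * (size F)%:R)%R].

Variable X : topologicalType.

Definition clopen_base : Prop :=
  forall (U : set X) (x : X), open U -> U x ->
    exists V : set X, [/\ clopen V, V x & V `<=` U].

Definition is_action (alpha : G -> X -> X) : Prop :=
  [/\ forall x, alpha monoid.one x = x,
      forall g h x, alpha (monoid.mul g h) x = alpha g (alpha h x) &
      forall g, continuous (alpha g)].

Variable alpha : G -> X -> X.

(* Y = X x N (N discrete); the action of Gamma x Sym(N) on Y. *)
Definition Y := (X * nat)%type.

Definition tact (g : G) (s : nat -> nat) (p : Y) : Y := (alpha g p.1, s p.2).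

Definition bounded (A : set Y) : Prop :=
  exists N : nat, forall x n, A (x, n) -> (n < N)%N.

Definition bclopen (A : set Y) : Prop := clopen A /\ bounded A.

Definition equidec (A B : set Y) : Prop :=
  exists (n : nat) (P : nat -> set Y) (g : nat -> G) (s : nat -> nat -> nat),
    [/\ forall i, (i < n)%N -> clopen (P i) /\ bijective (s i),
        A = \bigcup_(i in `I_n) P i,
        trivIset `I_n P,
        B = \bigcup_(i in `I_n) (tact (g i) (s i) @` P i) &
        trivIset `I_n (fun i => tact (g i) (s i) @` P i)].

Definition cls (A : set Y) : set (set Y) := [set B | bclopen B /\ equidec A B].

(* Elements of the type semigroup T(alpha) are the classes [A]. *)
Definition inT (a : set (set Y)) : Prop := exists A, bclopen A /\ a = cls A.

Definition tzero : set (set Y) := cls set0.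

(* [A] + [B] = [A' |_| B'] for disjoint representatives A' in a, B' in b. *)
Definition tadd (a b : set (set Y)) : set (set Y) :=
  let p := xget (set0, set0)
             [set p : set Y * set Y | [/\ a p.1, b p.2 & p.1 `&` p.2 = set0]] in
  cls (p.1 `|` p.2).

Definition tle (a b : set (set Y)) : Prop := exists c, inT c /\ b = tadd a c.

Definition tmul (k : nat) (b : set (set Y)) : set (set Y) := iter k (tadd b) tzero.

Definition order_unit (b : set (set Y)) : Prop :=
  forall a, inT a -> exists k : nat, tle a (tmul k b).

(* A state: a monoid homomorphism T(alpha) -> [0, +oo]
   (only its values on T(alpha) matter). *)
Definition state (mu : set (set Y) -> \bar Rdefinitions.R) : Prop :=
  [/\ forall a, inT a -> (0 <= mu a)%E,
      mu tzero = 0%E &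
      forall a b, inT a -> inT b -> mu (tadd a b) = (mu a + mu b)%E].

Definition Mstate (mu : set (set Y) -> \bar Rdefinitions.R) : Prop :=
  state mu /\ mu (cls [set p : Y | p.2 = 0%N]) = 1%E.

End Defs.

(* Main.v *)
Require Import Defs.
From HB Require Import structures.
From mathcomp Require Import all_boot all_order all_algebra.
From mathcomp Require Import all_classical all_reals topology ereal.
From mathcomp Require Import Rstruct Rstruct_topology.
From mathcomp Require Import normedtype.
From mathcomp Require Import zify lra.
Set Implicit Arguments. Unset Strict Implicit. Unset Printing Implicit Defensive.
Import Order.TTheory GRing.Theory Num.Theory.
Import numFieldNormedType.Exports.
Local Open Scope classical_set_scope.
Section Topo.
Variable X : topologicalType.
Definition slice (A : set (X * nat)) (n : nat) : set X := [set x | A (x, n)].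

Lemma nbhs_natE (n : nat) (S : set nat) : nbhs n S <-> S n.
Proof. exact: principal_filterP. Qed.

Lemma nbhs_prodE (p : X * nat) (A : set (X * nat)) :
  nbhs p A <-> exists2 Q, nbhs p.1 Q.1 /\ nbhs p.2 Q.2 & Q.1 `*` Q.2 `<=` A.
Proof. by []. Qed.

Lemma open_sliceP (A : set (X * nat)) : open A <-> forall n, open (slice A n).
Proof.
split.
- move=> oA n; rewrite openE => x Ax.
  have : nbhs (x, n) A by move: oA; rewrite openE => /(_ _ Ax).
  move=> /nbhs_prodE [[Q R] [/= Qx Rn] QRA].
  apply: filterS Qx => y Qy; apply: (QRA (y, n)); split => //.
  exact: nbhs_singleton Rn.
- move=> oS; rewrite openE => -[x n] Axn.
  have : nbhs x (slice A n) by move: (oS n); rewrite openE => /(_ _ Axn).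
  move=> Sx; apply/nbhs_prodE; exists (slice A n, [set n]) => /=.
    by split => //; apply/nbhs_natE.
  by move=> [y m] [/= ? ->].
Qed.

Lemma closed_sliceP (A : set (X * nat)) : closed A <-> forall n, closed (slice A n).
Proof.
rewrite -openC open_sliceP; split => h n.
  by rewrite -openC; exact (h n).
by have := h n; rewrite -openC; exact.
Qed.

Lemma clopen_sliceP (A : set (X * nat)) : clopen A <-> forall n, clopen (slice A n).
Proof.
split.
  by move=> [/open_sliceP o /closed_sliceP c] n; split.
move=> h; split; [apply/open_sliceP => n; exact: (h n).1|apply/closed_sliceP => n; exact: (h n).2].
Qed.
End Topo.

Section Main.
Variable G : groupType.
Variable X : topologicalType.
Variable alpha : G -> X -> X.
Hypothesis hact : is_action alpha.

Local Notation tact := (tact alpha).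
Local Notation equidec := (equidec alpha).
Local Notation gm := (@monoid.mul G).
Local Notation gi := (@monoid.inv G).
Local Notation g1 := (@monoid.one G).

Lemma act1 x : alpha g1 x = x. Proof. by case: hact. Qed.
Lemma actM g h x : alpha (gm g h) x = alpha g (alpha h x). Proof. by case: hact. Qed.
Lemma actC g : continuous (alpha g). Proof. by case: hact. Qed.
Lemma actVK g x : alpha (gi g) (alpha g x) = x.
Proof. by rewrite -actM monoid.mulVg act1. Qed.
Lemma actKV g x : alpha g (alpha (gi g) x) = x.
Proof. by rewrite -actM monoid.mulgV act1. Qed.

Lemma clopen_pre g (S : set X) : clopen S -> clopen (alpha g @^-1` S).
Proof.
have hc := proj1 (continuousP _) (@actC g).
move=> [oS cS]; split; first exact: hc.
rewrite -openC preimage_setC; apply: hc.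
by rewrite openC.
Qed.

Lemma clopen_tpre g s (Q : set (Y X)) : clopen Q -> clopen (tact g s @^-1` Q).
Proof.
move=> /clopen_sliceP h; apply/clopen_sliceP => n; exact: clopen_pre (h (s n)).
Qed.

Lemma tact_imageE g s s' (P : set (Y X)) : cancel s s' -> cancel s' s ->
  tact g s @` P = tact (gi g) s' @^-1` P.
Proof.
move=> ss' s's; apply/seteqP; split.
  by move=> _ [[x n] Pxn <-]; rewrite /preimage /tact /= actVK ss'.
move=> [y m] Py; exists (alpha (gi g) y, s' m) => //.
by rewrite /tact /= actKV s's.
Qed.

Lemma clopen_image g s (P : set (Y X)) : bijective s -> clopen P -> clopen (tact g s @` P).
Proof. by case=> s' h1 h2 cP; rewrite (tact_imageE _ _ h1 h2); exact: clopen_tpre. Qed.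

Lemma tact_comp g h s r y : tact h r (tact g s y) = tact (gm h g) (r \o s) y.
Proof. by rewrite /tact /= actM. Qed.

Lemma tact_inj g s : injective s -> injective (tact g s).
Proof.
move=> si [x n] [x' n']; rewrite /tact /= => -[e1 e2].
have := congr1 (alpha (gi g)) e1; rewrite !actVK => ->; by rewrite (si _ _ e2).
Qed.

Lemma tact1 y : tact g1 id y = y.
Proof. by case: y => x n; rewrite /tact /= act1. Qed.

Lemma image_tact1 (P : set (Y X)) : tact g1 id @` P = P.
Proof.
apply/seteqP; split => [_ [y Py <-]|y Py]; first by rewrite tact1.
by exists y => //; rewrite tact1.
Qed.

Lemma equidec_refl A : clopen A -> equidec A A.
Proof.
move=> cA; exists 1%N, (fun=> A), (fun=> g1), (fun=> id); split.
- by move=> i _; split => //; exists id.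
- apply/seteqP; split => [y Ay|y [i _ //]]; by exists 0%N.
- by move=> i j /= hi hj _; lia.
- rewrite image_tact1; apply/seteqP; split => [y Ay|y [i _ //]]; by exists 0%N.
- by move=> i j /= hi hj _; lia.
Qed.


Lemma image_image g s s' (P : set (Y X)) : cancel s s' ->
  tact (gi g) s' @` (tact g s @` P) = P.
Proof.
move=> ss'; apply/seteqP; split.
  move=> _ [_ [[x n] Pxn <-] <-]; by rewrite /tact /= actVK ss'.
move=> [x n] Pxn; exists (tact g s (x, n)); first by exists (x, n).
by rewrite /tact /= actVK ss'.
Qed.

Lemma equidec_sym A B : equidec A B -> equidec B A.
Proof.
move=> [n [P [g [s [hP AP tP BP tQ]]]]].
have /choice [s' hs'] : forall i, exists t : nat -> nat, (i < n)%N ->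
    cancel (s i) t /\ cancel t (s i).
  move=> i; case: (ltnP i n) => hi; last by exists id => /=; lia.
  by have [_ [t h1 h2]] := hP i hi; exists t.
exists n, (fun i => tact (g i) (s i) @` P i), (fun i => gi (g i)), s'; split => //.
- move=> i hi; have [h1 h2] := hs' i hi; split; last by exists (s i).
  by apply: clopen_image; [exact: (hP i hi).2|exact: (hP i hi).1].
- rewrite AP; apply: eq_bigcupr => i hi; rewrite image_image //.
  exact: (hs' i hi).1.
- move=> i j hi hj; rewrite !image_image; [exact: tP|exact: (hs' j hj).1|exact: (hs' i hi).1].
Qed.

Lemma clopen_bigcupI (T : topologicalType) n (F : nat -> set T) :
  (forall i, (i < n)%N -> clopen (F i)) -> clopen (\bigcup_(i in `I_n) F i).
Proof.
move=> h; rewrite bigcup_mkord.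
elim: n h => [|n IH] h; first by rewrite big_ord0; exact: clopen0.
rewrite big_ord_recr /=; apply: clopenU; last exact: h.
by apply: IH => i hi; apply: h; lia.
Qed.

Lemma equidec_clopen_r A B : equidec A B -> clopen B.
Proof.
move=> [n [P [g [s [hP AP tP BP tQ]]]]]; rewrite BP.
apply: clopen_bigcupI => i hi.
by apply: clopen_image; [exact: (hP i hi).2|exact: (hP i hi).1].
Qed.

Lemma equidec_clopen_l A B : equidec A B -> clopen A.
Proof. by move/equidec_sym/equidec_clopen_r. Qed.

Lemma bij_inj_nat (f : nat -> nat) : bijective f -> injective f.
Proof. by case=> f' h1 h2; exact: can_inj h1. Qed.

Lemma equidec_trans A B C : equidec A B -> equidec B C -> equidec A C.
Proof.
move=> [n [P [g [s [hP AP tP BP tPi]]]]] [m [Q [h [r [hQ BQ tQ CQ tQi]]]]].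
pose R t := P (t %/ m)%N `&` (tact (g (t %/ m)%N) (s (t %/ m)%N) @^-1` Q (t %% m)%N).
exists (n * m)%N, R, (fun t => gm (h (t %% m)%N) (g (t %/ m)%N)),
  (fun t => r (t %% m)%N \o s (t %/ m)%N); split.
- move=> t ht; have mpos : (0 < m)%N by case: m ht {R hQ BQ tQ CQ tQi} => //; rewrite muln0.
  have h1 : (t %/ m < n)%N by rewrite ltn_divLR.
  have h2 : (t %% m < m)%N by rewrite ltn_mod.
  split; last by apply: bij_comp; [exact: (hQ _ h2).2|exact: (hP _ h1).2].
  apply: clopenI; first exact: (hP _ h1).1.
  exact: clopen_tpre (hQ _ h2).1.
- rewrite AP; apply/seteqP; split.
    move=> y [i /= hi Piy].
    have : B (tact (g i) (s i) y) by rewrite BP; exists i => //; exists y.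
    rewrite BQ => -[j /= hj Qj].
    exists (i * m + j)%N => /=; first by nia.
    have e1 : ((i * m + j) %/ m = i)%N by rewrite divnMDl ?divn_small ?addn0 //; lia.
    have e2 : ((i * m + j) %% m = j)%N by rewrite modnMDl modn_small.
    by rewrite /R e1 e2; split.
  move=> y [t /= ht [Py _]].
  have mpos : (0 < m)%N by case: m ht {R hQ BQ tQ CQ tQi Py} => //; rewrite muln0.
  by exists (t %/ m)%N => //=; rewrite ltn_divLR.
- move=> t t' ht ht' [y [[Py Qy] [Py' Qy']]].
  have mpos : (0 < m)%N by case: m ht {R hQ BQ tQ CQ tQi Py Py' Qy Qy' ht'} => //; rewrite muln0.
  have e1 : (t %/ m = t' %/ m)%N.
    by apply: tP => /=; [rewrite ltn_divLR|rewrite ltn_divLR|exists y].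
  rewrite /preimage /= -e1 in Qy'.
  have e2 : (t %% m = t' %% m)%N.
    by apply: tQ => /=; [rewrite ltn_mod|rewrite ltn_mod|exists (tact (g (t %/ m)%N) (s (t %/ m)%N) y)].
  by rewrite (divn_eq t m) (divn_eq t' m) e1 e2.
- rewrite CQ; apply/seteqP; split.
    move=> z [j /= hj [w Qw <-]].
    have : B w by rewrite BQ; exists j.
    rewrite BP => -[i /= hi [y Py wy]].
    exists (i * m + j)%N => /=; first by nia.
    have e1 : ((i * m + j) %/ m = i)%N by rewrite divnMDl ?divn_small ?addn0 //; lia.
    have e2 : ((i * m + j) %% m = j)%N by rewrite modnMDl modn_small.
    rewrite e1 e2; exists y; first by rewrite /R e1 e2; split => //; rewrite /preimage /= wy.
    by rewrite -tact_comp wy.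
  move=> z [t /= ht [y [Py Qy] <-]].
  have mpos : (0 < m)%N by case: m ht {R hQ BQ tQ CQ tQi Py Qy} => //; rewrite muln0.
  exists (t %% m)%N => /=; first by rewrite ltn_mod.
  by exists (tact (g (t %/ m)%N) (s (t %/ m)%N) y) => //; rewrite tact_comp.
- move=> t t' ht ht' [z [[y [Py Qy] e] [y' [Py' Qy'] e']]].
  have mpos : (0 < m)%N by case: m ht {R hQ BQ tQ CQ tQi Py Qy Py' Qy' e e' ht'} => //; rewrite muln0.
  have h1 : (t %/ m < n)%N by rewrite ltn_divLR.
  have h2 : (t %% m < m)%N by rewrite ltn_mod.
  have h1' : (t' %/ m < n)%N by rewrite ltn_divLR.
  have h2' : (t' %% m < m)%N by rewrite ltn_mod.
  rewrite -tact_comp in e; rewrite -tact_comp in e'.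
  have e2 : (t %% m = t' %% m)%N.
    apply: tQi => //; exists z; split.
      by exists (tact (g (t %/ m)%N) (s (t %/ m)%N) y).
    by exists (tact (g (t' %/ m)%N) (s (t' %/ m)%N) y').
  rewrite -e2 in e'; rewrite -e' in e.
  have := tact_inj (bij_inj_nat (hQ _ h2).2) e => e3.
  have e1 : (t %/ m = t' %/ m)%N.
    apply: tPi => //; exists (tact (g (t %/ m)%N) (s (t %/ m)%N) y); split.
      by exists y.
    by rewrite e3; exists y'.
  by rewrite (divn_eq t m) (divn_eq t' m) e1 e2.
Qed.

Lemma equidec_union A A' C C' : equidec A A' -> equidec C C' ->
  A `&` C = set0 -> A' `&` C' = set0 -> equidec (A `|` C) (A' `|` C').
Proof.
move=> [n [P [g [s [hP AP tP BP tPi]]]]] [m [Q [h [r [hQ BQ tQ CQ tQi]]]]] dAC dAC'.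
exists (n + m)%N, (fun t => if (t < n)%N then P t else Q (t - n)%N),
  (fun t => if (t < n)%N then g t else h (t - n)%N),
  (fun t => if (t < n)%N then s t else r (t - n)%N); split.
- move=> t ht; case: ifPn => htn; first exact: hP.
  by apply: hQ; lia.
- rewrite AP BQ; apply/seteqP; split.
    move=> y [[i /= hi Py]|[j /= hj Qy]].
      by exists i => /=; [lia|rewrite hi].
    exists (j + n)%N => /=; first lia.
    have -> : (j + n < n)%N = false by lia.
    by rewrite addnK.
  move=> y [t /= ht]; case: ifPn => htn Py.
    by left; exists t.
  by right; exists (t - n)%N => //=; lia.
- move=> t t' /= ht ht' [y []]; case: ifPn => h1; case: ifPn => h2 => Py Py'.
  + by apply: tP => //; exists y.
  + have : (A `&` C) y.
      by split; [rewrite AP; exists t => //=|rewrite BQ; exists (t' - n)%N => //=; lia].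
    by rewrite dAC.
  + have : (A `&` C) y.
      by split; [rewrite AP; exists t' => //=|rewrite BQ; exists (t - n)%N => //=; lia].
    by rewrite dAC.
  + have : (t - n = t' - n)%N by apply: tQ => /=; [lia|lia|exists y].
    lia.
- rewrite BP CQ; apply/seteqP; split.
    move=> y [[i /= hi Py]|[j /= hj Qy]].
      by exists i => /=; [lia|rewrite hi].
    exists (j + n)%N => /=; first lia.
    have -> : (j + n < n)%N = false by lia.
    by rewrite addnK.
  move=> y [t /= ht]; case: ifPn => htn Py.
    by left; exists t.
  by right; exists (t - n)%N => //=; lia.
- move=> t t' /= ht ht' [y []]; case: ifPn => h1; case: ifPn => h2 => Py Py'.
  + by apply: tPi => //; exists y.
  + have : (A' `&` C') y.
      by split; [rewrite BP; exists t => //=|rewrite CQ; exists (t' - n)%N => //=; lia].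
    by rewrite dAC'.
  + have : (A' `&` C') y.
      by split; [rewrite BP; exists t' => //=|rewrite CQ; exists (t - n)%N => //=; lia].
    by rewrite dAC'.
  + have : (t - n = t' - n)%N by apply: tQi => /=; [lia|lia|exists y].
    lia.
Qed.

Local Notation cls := (cls alpha).
Local Notation tadd := (tadd alpha).
Local Notation inT := (inT alpha).
Local Notation tzero := (tzero alpha).

Lemma equidec_single g s (P : set (Y X)) : clopen P -> bijective s ->
  equidec P (tact g s @` P).
Proof.
move=> cP bs; exists 1%N, (fun=> P), (fun=> g), (fun=> s); split.
- by move=> i _; split.
- apply/seteqP; split => [y Py|y [i _ //]]; by exists 0%N.
- by move=> i j /= hi hj _; lia.
- apply/seteqP; split => [y Py|y [i _ //]]; by exists 0%N.
- by move=> i j /= hi hj _; lia.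
Qed.

Lemma cls_eq A B : equidec A B -> cls A = cls B.
Proof.
move=> AB; apply/seteqP; split => C [bC e]; split => //.
  exact: equidec_trans (equidec_sym AB) e.
exact: equidec_trans AB e.
Qed.

Lemma cls_self (A : set (Y X)) : bclopen A -> cls A A.
Proof. by move=> bA; split => //; apply: equidec_refl; case: bA. Qed.

Lemma cls_mem A B : cls A B -> cls A = cls B.
Proof. by move=> [_ e]; exact: cls_eq. Qed.

Lemma bclopenU (A C : set (Y X)) : bclopen A -> bclopen C -> bclopen (A `|` C).
Proof.
move=> [cA [N1 hA]] [cC [N2 hC]]; split; first exact: clopenU.
exists (N1 + N2)%N => x n [/hA|/hC]; lia.
Qed.

Lemma bclopen0 : bclopen (set0 : set (Y X)).
Proof. by split; [exact: clopen0|exists 0%N]. Qed.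

Definition swp (D n : nat) : nat :=
  if (n < D)%N then (n + D)%N else if (n < D + D)%N then (n - D)%N else n.

Lemma swpK D : involutive (swp D).
Proof.
move=> n; rewrite /swp.
case: (ltnP n D) => h1.
  have -> : (n + D < D)%N = false by lia.
  have -> : (n + D < D + D)%N by lia.
  by rewrite addnK.
case: (ltnP n (D + D)) => h2.
  have -> : (n - D < D)%N by lia.
  lia.
have -> : (n < D)%N = false by lia.
by have -> : (n < D + D)%N = false by lia.
Qed.

Lemma disjoint_rep (A C : set (Y X)) : bclopen A -> bclopen C ->
  exists C', [/\ bclopen C', equidec C C' & A `&` C' = set0].
Proof.
move=> [cA [N1 hA]] [cC [N2 hC]].
have bs : bijective (swp (N1 + N2)) by exists (swp (N1 + N2)); exact: swpK.
exists (tact g1 (swp (N1 + N2)) @` C); split.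
- split; first exact: clopen_image.
  exists ((N1 + N2) + (N1 + N2))%N => x q [[y n] Cyn] [_ <-].
  have := hC _ _ Cyn; rewrite /swp => hn.
  have -> : (n < N1 + N2)%N by lia.
  lia.
- exact: equidec_single.
- apply/seteqP; split => // -[x q] [Axq [[y n] Cyn [_ e]]].
  have := hA _ _ Axq; have := hC _ _ Cyn; move: e; rewrite /swp.
  have -> : (n < N1 + N2)%N by have := hC _ _ Cyn; lia.
  move=> <-; lia.
Qed.

Lemma tadd_cls (A C : set (Y X)) : bclopen A -> bclopen C -> A `&` C = set0 ->
  tadd (cls A) (cls C) = cls (A `|` C).
Proof.
move=> bA bC dAC; rewrite /Defs.tadd.
set P := [set q : set (Y X) * set (Y X) | _].
have : P (xget (set0, set0) P).
  by apply: (@xgetI _ _ _ (A, C)); split => //=; apply: cls_self.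
move: (xget _ P) => p.
move=> [[b1 e1] [b2 e2] d12]; apply: esym; apply: cls_eq.
exact: equidec_union.
Qed.

Lemma tadd_rep a c : inT a -> inT c ->
  exists A C, [/\ bclopen A, bclopen C, A `&` C = set0 &
     [/\ a = cls A, c = cls C & tadd a c = cls (A `|` C)]].
Proof.
move=> [A [bA ->]] [C [bC ->]].
have [C' [bC' e d]] := disjoint_rep bA bC.
exists A, C'; rewrite (cls_eq e); split => //; split => //.
exact: tadd_cls.
Qed.

Lemma inT_add a c : inT a -> inT c -> inT (tadd a c).
Proof.
move=> ha hc; have [A [C [bA bC _ [_ _ ->]]]] := tadd_rep ha hc.
by exists (A `|` C); split => //; apply: bclopenU.
Qed.

Lemma inT0 : inT tzero.
Proof. by exists set0; split => //; exact: bclopen0. Qed.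

Local Notation tmul := (tmul alpha).

Lemma inT_tmul k b : inT b -> inT (tmul k b).
Proof. by move=> hb; elim: k => [|k IH] /=; [exact: inT0|exact: inT_add]. Qed.

Definition E0 : set (Y X) := [set p : Y X | p.2 = 0%N].

Lemma bclopenE0 : bclopen E0.
Proof.
split; last by exists 1%N => x n; rewrite /E0 /= => ->.
apply/clopen_sliceP => -[|n].
  rewrite (_ : slice _ _ = setT); first exact: clopenT.
  by apply/seteqP; split => // x _; rewrite /slice /E0.
rewrite (_ : slice _ _ = set0); first exact: clopen0.
by apply/seteqP; split => // x; rewrite /slice /E0 /=.
Qed.

Lemma forward b mu : inT b -> order_unit alpha b -> Mstate alpha mu -> (0 < mu b)%E.
Proof.
move=> hb ou [[mu0 muz muD] mE0].
have hE0 : inT (cls E0) by exists E0; split => //; exact: bclopenE0.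
have [k [c [hc e]]] := ou _ hE0.
rewrite lt_neqAle mu0 // andbT; apply/eqP => e0.
have hk : forall k, mu (tmul k b) = 0%E.
  elim=> [|j IH] /=; first exact: muz.
  by rewrite muD //; [rewrite -e0 IH adde0|exact: inT_tmul].
have := hk k; rewrite e muD // mE0 => h1.
have : (1 <= 1 + mu c)%E by apply: leeDl; exact: mu0.
by rewrite h1 leNgt lte01.
Qed.

Local Notation tle := (tle alpha).

Definition rot (M N n : nat) : nat :=
  if (n < M)%N then (n + N)%N else if (n < M + N)%N then (n - M)%N else n.
Definition rot' (M N n : nat) : nat :=
  if (n < N)%N then (n + M)%N else if (n < M + N)%N then (n - N)%N else n.

Lemma rot_bij M N : bijective (rot M N).
Proof.
exists (rot' M N) => n; rewrite /rot /rot'.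
- case: (ltnP n M) => h1.
    have -> : (n + N < N)%N = false by lia.
    have -> : (n + N < M + N)%N by lia.
    by rewrite addnK.
  case: (ltnP n (M + N)) => h2.
    have -> : (n - M < N)%N by lia.
    lia.
  have -> : (n < N)%N = false by lia.
  by have -> : (n < M + N)%N = false by lia.
- case: (ltnP n N) => h1.
    have -> : (n + M < M)%N = false by lia.
    have -> : (n + M < M + N)%N by lia.
    by rewrite addnK.
  case: (ltnP n (M + N)) => h2.
    have -> : (n - N < M)%N by lia.
    lia.
  have -> : (n < M)%N = false by lia.
  by have -> : (n < M + N)%N = false by lia.
Qed.

Definition Dk (B : set (Y X)) (N k : nat) : set (Y X) :=
  [set p | (p.2 < k * N)%N /\ B (p.1, p.2 %% N)%N].

Lemma bclopenD (B : set (Y X)) N k : bclopen B -> bclopen (Dk B N k).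
Proof.
move=> [/clopen_sliceP cB _]; split; last by exists (k * N)%N => x n [].
apply/clopen_sliceP => q.
rewrite (_ : slice _ _ = if (q < k * N)%N then slice B (q %% N)%N else set0).
  by case: ifP => _; [exact: cB|exact: clopen0].
apply/seteqP; split => x; rewrite /slice /Dk /=.
  by move=> [-> ?].
by case: ifP => // ->.
Qed.

Lemma tmul_D (B : set (Y X)) N k : bclopen B -> (forall x n, B (x, n) -> (n < N)%N) ->
  tmul k (cls B) = cls (Dk B N k).
Proof.
move=> bB hN; elim: k => [|k IH] /=.
  rewrite /Defs.tzero; congr cls; apply/seteqP; split => // -[x n] [].
  by rewrite mul0n.
rewrite IH.
set D' := tact g1 (rot (k * N) N) @` Dk B N k.
have bD : bclopen (Dk B N k) by exact: bclopenD.
have bD' : bclopen D'.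
  split; first by apply: clopen_image; [exact: rot_bij|case: bD].
  exists (k.+1 * N)%N => x q [[y n] [/= hn _] [_ <-]].
  by rewrite /rot hn; lia.
rewrite (cls_eq (@equidec_single g1 _ _ (proj1 bD) (rot_bij (k * N) N))) -/D'.
rewrite tadd_cls //; last first.
  apply/seteqP; split => // -[x q] [/hN hq [[y n] [/= hn _] [_ e]]].
  by move: e; rewrite /rot hn => e; lia.
congr cls; apply/seteqP; split.
  move=> [x q] [Bxq|[[y n] [/= hn Byn] [ey e]]].
    have hq := hN _ _ Bxq; split => /=; first by rewrite mulSn; lia.
    by rewrite modn_small.
  move: e; rewrite /rot hn => <-; rewrite -ey act1; split => /=.
    by rewrite mulSn; lia.
  by rewrite modnDr.
move=> [x q] [/= hq Bq].
case: (ltnP q N) => hqN.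
  by left; rewrite -(modn_small hqN).
right; exists (x, q - N)%N.
  split => /=; first by rewrite mulSn in hq; lia.
  by rewrite -(modnDr (q - N) N) subnK.
rewrite /tact /= act1 /rot.
have -> : (q - N < k * N)%N by rewrite mulSn in hq; lia.
by rewrite subnK.
Qed.

Lemma tle_sub (A A' D : set (Y X)) : bclopen A -> bclopen D -> equidec A A' ->
  A' `<=` D -> tle (cls A) (cls D).
Proof.
move=> bA [cD [N hD]] e sub.
have cA' := equidec_clopen_r e.
have bc : bclopen (D `\` A').
  split; first by apply: clopenI => //; apply: clopenC.
  by exists N => x n [/hD].
exists (cls (D `\` A')); split; first by exists (D `\` A').
have bA' : bclopen A' by split => //; exists N => x n /sub /hD.
rewrite (cls_eq e) tadd_cls //; first by rewrite setDUK.
by apply/seteqP; split => // y [? []].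
Qed.

Definition swap (a b n : nat) : nat := if n == a then b else if n == b then a else n.

Lemma swap_bij a b : bijective (swap a b).
Proof.
exists (swap a b) => n; rewrite /swap.
- case: (eqVneq n a) => [->|na]; first by rewrite eqxx; case: eqVneq.
  case: (eqVneq n b) => [->|nb]; first by rewrite eqxx.
  by rewrite (negPf na) (negPf nb).
- case: (eqVneq n a) => [->|na]; first by rewrite eqxx; case: eqVneq.
  case: (eqVneq n b) => [->|nb]; first by rewrite eqxx.
  by rewrite (negPf na) (negPf nb).
Qed.

Lemma swap_l a b : swap a b a = b.
Proof. by rewrite /swap eqxx. Qed.

Section Cover.
Variables (B : set (Y X)) (N : nat) (l : seq G).
Hypothesis bB : bclopen B.
Hypothesis hN : forall x n, B (x, n) -> (n < N)%N.
Let m := size l.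
Let J := (m * N)%N.
Let gg (i : nat) := nth g1 l i.
Let W (c : nat) : set X := [set x | B (alpha (gg (c %/ N)%N) x, (c %% N)%N)].
Let E (c : nat) : set X := W c `&` ~` (\bigcup_(c' in `I_c) W c').
Hypothesis cov : forall x, exists2 i, (i < m)%N & exists n, B (alpha (gg i) x, n).

Lemma clopenW c : clopen (W c).
Proof. by move: bB => [/clopen_sliceP h _]; exact: (@clopen_pre (gg (c %/ N)%N) (slice B (c %% N)%N) (h _)). Qed.

Lemma clopenE c : clopen (E c).
Proof.
apply: clopenI; first exact: clopenW.
by apply: (clopenC set0); apply: clopen_bigcupI => i _; exact: clopenW.
Qed.

Lemma E_inj c c' x : E c x -> E c' x -> c = c'.
Proof.
move=> [Wc nc] [Wc' nc']; case: (ltngtP c c') => // h.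
  by exfalso; apply: nc'; exists c.
by exfalso; apply: nc; exists c'.
Qed.

Lemma E_cov x : exists2 c, (c < J)%N & E c x.
Proof.
have [i hi [n Bn]] := cov x.
have hn := hN Bn.
have Npos : (0 < N)%N by lia.
have ex : exists c, (c < J)%N && `[< W c x >].
  exists (i * N + n)%N; apply/andP; split; first by rewrite /J; nia.
  apply/asboolP; rewrite /W divnMDl // divn_small // addn0.
  by rewrite modnMDl modn_small.
case: (ex_minnP ex) => c /andP [hc /asboolP Wc] hmin.
exists c => //; split => // -[c' /= hc' Wc'].
have := hmin c'; rewrite (ltn_trans hc' hc) /=.
have -> : `[< W c' x >] = true by apply/asboolP.
by move=> /(_ isT); lia.
Qed.

Variables (A : set (Y X)) (M : nat).
Hypothesis bA : bclopen A.
Hypothesis hM : forall x n, A (x, n) -> (n < M)%N.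

Let Pc (t : nat) : set (Y X) :=
  [set p | A p /\ p.2 = (t %/ J)%N /\ E (t %% J)%N p.1].
Let gc (t : nat) := gg ((t %% J) %/ N)%N.
Let sc (t : nat) := swap (t %/ J)%N t.
Let A' := \bigcup_(t in `I_(M * J)) (tact (gc t) (sc t) @` Pc t).

Lemma equidec_cover : equidec A A'.
Proof.
exists (M * J)%N, Pc, gc, sc; split => //.
- move=> t _; split; last exact: swap_bij.
  apply/clopen_sliceP => q.
  rewrite (_ : slice _ _ = if q == (t %/ J)%N then slice A q `&` E (t %% J)%N else set0).
    case: ifP => _; last exact: clopen0.
    by apply: clopenI; [move: bA => [/clopen_sliceP h _]; exact: h|exact: clopenE].
  apply/seteqP; split => x; rewrite /slice /Pc /=.
    by move=> [Ax [e Ex]]; subst q; rewrite eqxx /=; exact: (conj Ax Ex).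
  by case: eqP => // -> [Ax Ex].
- apply/seteqP; split; last by move=> y [t _ [Ay _]].
  move=> [x q] Axq; have [c hc Ec] := E_cov x.
  have Jpos : (0 < J)%N by lia.
  have hq := hM Axq.
  exists (q * J + c)%N => /=; first by nia.
  by rewrite /Pc /= divnMDl // divn_small // addn0 modnMDl modn_small.
- move=> t t' ht ht' [[x q] [[_ [/= e1 E1]] [_ [/= e2 E2]]]].
  have e3 := E_inj E1 E2.
  by rewrite (divn_eq t J) (divn_eq t' J) -e1 -e2 e3.
- move=> t t' ht ht' [z [[[x q] [_ [/= e1 _]] <-] [[x' q'] [_ [/= e2 _]] e]]].
  move: e; rewrite /tact /sc /= e1 e2 !swap_l; by case.
Qed.

Lemma cover_sub : A' `<=` Dk B N (M * m).
Proof.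
move=> _ [t /= ht [[x q] [_ [/= e1 [Wx _]]] <-]].
rewrite /tact /sc /= e1 swap_l; split => /=; first by rewrite /J mulnA in ht.
move: Wx; rewrite /W /gc.
by rewrite (modn_dvdm t (dvdn_mull m (dvdnn N))).
Qed.

End Cover.

Lemma order_unit_cover (B : set (Y X)) N (l : seq G) : bclopen B ->
  (forall x n, B (x, n) -> (n < N)%N) ->
  (forall x, exists2 i, (i < size l)%N & exists n, B (alpha (nth g1 l i) x, n)) ->
  order_unit alpha (cls B).
Proof.
move=> bB hN cov _ [A [bA ->]].
have [M hM] := bA.2.
exists (M * size l)%N; rewrite (tmul_D _ bB hN).
apply: tle_sub bA (bclopenD _ _ bB) (equidec_cover bB hN cov bA hM) _.
exact: cover_sub.
Qed.

Lemma dichotomy (V : G -> set X) : compact [set: X] -> (forall g, open (V g)) ->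
  (exists l : seq G, forall x, exists2 i, (i < size l)%N & V (nth g1 l i) x) \/
  (exists x0, forall g, ~ V g x0).
Proof.
move=> cpt oV.
case: (pselect (exists l : seq G, forall x, exists2 i, (i < size l)%N & V (nth g1 l i) x)) => h.
  by left.
right.
pose Bs (l : seq G) : set X := [set x | forall i, (i < size l)%N -> ~ V (nth g1 l i) x].
have FF : Filter (filter_from setT Bs).
  apply: filter_fromT_filter; first by exists [::].
  move=> l1 l2; exists (l1 ++ l2) => x Bx; split.
    move=> i hi; have := Bx i; rewrite size_cat nth_cat hi; apply; lia.
  move=> i hi; have := Bx (size l1 + i)%N; rewrite size_cat nth_cat.
  have -> : (size l1 + i < size l1)%N = false by lia.
  rewrite addKn; apply; lia.
have PF : ProperFilter (filter_from setT Bs).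
  apply: filter_from_proper => l _.
  apply: contrapT => nex; apply: h; exists l => x.
  apply: contrapT => nx; apply: nex; exists x => i hi Vi; apply: nx; by exists i.
have [p [_ cp]] := cpt _ PF (filterT).
exists p => g Vgp.
have : nbhs p (V g) by move: (oV g); rewrite openE => /(_ _ Vgp).
have hB : filter_from setT Bs (Bs [:: g]) by exists [:: g].
move=> /(cp _ _ hB) [x [/(_ 0%N isT)]].
by [].
Qed.

Definition cntN (N : nat) (A : set (Y X)) (x : X) : nat :=
  count (fun q => `[< A (x, q) >]) (iota 0 N).

Lemma cntN_le N A x : (cntN N A x <= N)%N.
Proof. by rewrite /cntN (leq_trans (count_size _ _)) // size_iota. Qed.

Lemma cntN_bound (A : set (Y X)) N N' x : (forall x n, A (x, n) -> (n < N)%N) ->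
  (N <= N')%N -> cntN N' A x = cntN N A x.
Proof.
move=> hA hNN'; rewrite /cntN -(subnKC hNN') iotaD count_cat add0n.
rewrite (@eq_in_count _ _ pred0 (iota N (N' - N))) ?count_pred0 ?addn0 //.
move=> q; rewrite mem_iota => /andP [h1 _]; apply: asboolF => /hA; lia.
Qed.

Lemma cntN_U N (A C : set (Y X)) x : A `&` C = set0 ->
  cntN N (A `|` C) x = (cntN N A x + cntN N C x)%N.
Proof.
move=> dAC; rewrite /cntN -count_predUI.
rewrite (@eq_count _ (predI _ _) pred0) ?count_pred0 ?addn0.
  by apply: eq_count => q /=; rewrite asbool_or.
move=> q /=; apply/negbTE/nandP; case: (pselect (A (x, q))) => hA; last first.
  by left; apply/negP => /asboolP.
right; apply/negP => /asboolP hC.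
have : (A `&` C) (x, q) by [].
by rewrite dAC.
Qed.

Lemma cntN0 N x : cntN N set0 x = 0%N.
Proof.
rewrite /cntN (@eq_count _ _ pred0) ?count_pred0 // => q.
exact: asboolF.
Qed.

Lemma cntN_bigcup N n (P : nat -> set (Y X)) x : trivIset `I_n P ->
  cntN N (\bigcup_(i in `I_n) P i) x = (\sum_(i < n) cntN N (P i) x)%N.
Proof.
elim: n => [|n IH] tP.
  rewrite big_ord0 (_ : \bigcup_(i in `I_0) P i = set0) ?cntN0 //.
  by apply/seteqP; split => // y [].
rewrite big_ord_recr /= -IH; last first.
  by move=> i j /= hi hj hij; apply: tP => //=; lia.
rewrite -cntN_U.
  congr cntN; apply/seteqP; split.
    move=> y [i /= hi Pi]; have [e|ne] := eqVneq i n; first by right; rewrite -e.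
    by left; exists i => //=; lia.
  by move=> y [[i /= hi Pi]|Pn]; [exists i => //=; lia|exists n => //=].
apply/seteqP; split => // y [[i /= hi Pi] Pn].
have : i = n by apply: tP => //=; [lia|exists y].
lia.
Qed.

Lemma cntN_img N g s (P : set (Y X)) x : bijective s ->
  (forall x n, P (x, n) -> (n < N)%N) ->
  (forall x n, (tact g s @` P) (x, n) -> (n < N)%N) ->
  cntN N (tact g s @` P) x = cntN N P (alpha (gi g) x).
Proof.
move=> [s' ss' s's] hP hI.
set y := alpha (gi g) x.
have e : forall q, `[< (tact g s @` P) (x, q) >] = `[< P (y, s' q) >].
  by move=> q; rewrite (tact_imageE _ _ ss' s's).
rewrite /cntN (eq_count e) -!size_filter.
rewrite -(size_map s'); apply: perm_size.
apply: uniq_perm.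
- rewrite map_inj_uniq; first by rewrite filter_uniq // iota_uniq.
  exact: can_inj s's.
- by rewrite filter_uniq // iota_uniq.
move=> n; apply/mapP/idP.
  move=> [q]; rewrite mem_filter mem_iota => /andP [/asboolP Pq _] ->.
  rewrite mem_filter mem_iota; apply/andP; split; first exact/asboolP.
  by have := hP _ _ Pq; lia.
rewrite mem_filter mem_iota => /andP [/asboolP Pn _].
exists (s n); last by rewrite ss'.
rewrite mem_filter mem_iota ss'; apply/andP; split; first exact/asboolP.
have : (tact g s @` P) (x, s n).
  by exists (y, n) => //; rewrite /tact /= /y actKV.
by move/hI; lia.
Qed.

Local Notation R := Rdefinitions.R.

Lemma sum_filter_le (T : eqType) (s : seq T) (P : pred T) (phi : T -> nat) N :
  (forall h, (phi h <= N)%N) -> (\sum_(h <- s | P h) phi h <= N * count P s)%N.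
Proof.
move=> hphi; elim: s => [|h s IH]; first by rewrite big_nil.
rewrite big_cons /=; have := hphi h; case: (P h) => /=; lia.
Qed.

Lemma folner_cmp (phi : G -> nat) N k (F : seq G) : uniq F -> (forall h, (phi h <= N)%N) ->
  (`| ((\sum_(h <- map (gm k) F) phi h)%:R - (\sum_(h <- F) phi h)%:R : R) |
     <= N%:R * (symdiff_card (left_translate k F) F)%:R)%R.
Proof.
move=> uF hphi; rewrite /symdiff_card /left_translate.
set F' := map (gm k) F.
have uF' : uniq F' by rewrite map_inj_uniq //; exact: monoid.mulgI.
rewrite (@bigID _ _ _ _ F' (fun h => h \in F)) (@bigID _ _ _ _ F (fun h => h \in F')) /=.
have -> : (\sum_(h <- F' | h \in F) phi h = \sum_(h <- F | h \in F') phi h)%N.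
  rewrite -[LHS]big_filter -[RHS]big_filter; apply: perm_big; apply: uniq_perm; rewrite ?filter_uniq //.
  by move=> h; rewrite !mem_filter andbC.
have h1 := sum_filter_le F' (fun h => h \notin F) hphi.
have h2 := sum_filter_le F (fun h => h \notin F') hphi.
move: h1 h2.
set a := (\sum_(h <- F | h \in F') phi h)%N.
set b := (\sum_(h <- F' | h \notin F) phi h)%N.
set c := (\sum_(h <- F | h \notin F') phi h)%N.
set cb := count _ F'. set cc := count _ F.
rewrite -!(ler_nat R) !natrM natrD => h1 h2.
rewrite !natrD opprD addrACA subrr add0r.
have b0 : (0 <= b%:R :> R)%R by rewrite ler0n.
have c0 : (0 <= c%:R :> R)%R by rewrite ler0n.
rewrite ler_norml; apply/andP; split; lra.
Qed.

Definition Sfol (K : seq G) (e : R) : set (seq G) :=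
  [set F | [/\ uniq F, (0 < size F)%N & forall k, k \in K ->
     ((symdiff_card (left_translate k F) F)%:R < e * (size F)%:R)%R]].

Section Measure.
Variable x0 : X.
Variable U : set_system (seq G).
Hypothesis UU : UltraFilter U.
Hypothesis UF : forall (K : seq G) (e : R), (0 < e)%R -> U (Sfol K e).

Local Open Scope ring_scope.

Definition avgN (N : nat) (A : set (Y X)) (F : seq G) : R :=
  (\sum_(h <- F) cntN N A (alpha h x0))%:R / (size F)%:R.

Lemma avgN_ge0 N A F : 0 <= avgN N A F.
Proof. by rewrite /avgN divr_ge0 // ler0n. Qed.

Lemma avgN_le N A F : avgN N A F <= N%:R.
Proof.
rewrite /avgN; case: (posnP (size F)) => hF.
  by rewrite hF invr0 mulr0 ler0n.
rewrite ler_pdivrMr ?ltr0n // -natrM ler_nat.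
have := @sum_filter_le _ F predT (fun h => cntN N A (alpha h x0)) N (fun h => cntN_le _ _ _).
by rewrite count_predT.
Qed.

Definition bnd (A : set (Y X)) : nat := xget 0%N [set N | forall x n, A (x, n) -> (n < N)%N].

Lemma bndP (A : set (Y X)) : bounded A -> forall x n, A (x, n) -> (n < bnd A)%N.
Proof. by move=> [N hN]; exact: (@xgetI _ 0%N [set N | forall x n, A (x, n) -> (n < N)%N] N hN). Qed.

Definition avg (A : set (Y X)) := avgN (bnd A) A.
Definition L (A : set (Y X)) : R := lim (avg A @ U).

Lemma avg_eq (A : set (Y X)) N : (forall x n, A (x, n) -> (n < N)%N) -> avg A = avgN N A.
Proof.
move=> hN; have hb := bndP (ex_intro _ N hN).
apply: funext => F; rewrite /avg /avgN; congr (_%:R / _).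
apply: eq_bigr => h _.
rewrite -(@cntN_bound _ _ (maxn N (bnd A)) _ hb) ?leq_maxr //.
by rewrite (@cntN_bound _ _ (maxn N (bnd A)) _ hN) ?leq_maxl.
Qed.

Lemma ultra_cvg (u : seq G -> R) (M : R) :
  (forall t, 0 <= u t <= M) -> u @ U --> lim (u @ U).
Proof.
move=> hu.
have hF : U (u @^-1` [set` `[0, M]]).
  apply: filterS (@filterT _ U _) => t _ /=.
  rewrite in_itv /=; exact (hu t).
have [p [_ cp]] := @segment_compact R 0 M (u @ U) _ hF.
suff up : u @ U --> p by rewrite (cvg_lim (@Rhausdorff R) up).
move=> B Bp.
case: (in_ultra_setVsetC (u @^-1` B) UU) => // hC.
have [t [/= nt Bt]] := cp (~` B) B hC Bp.
by [].
Qed.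

Lemma L_cvgN (A : set (Y X)) N : (forall x n, A (x, n) -> (n < N)%N) ->
  avgN N A @ U --> L A.
Proof.
move=> hN; rewrite /L (avg_eq hN); apply: (@ultra_cvg _ N%:R) => t.
by rewrite avgN_ge0 avgN_le.
Qed.

Lemma L_eq (A : set (Y X)) N l : (forall x n, A (x, n) -> (n < N)%N) ->
  avgN N A @ U --> l -> L A = l.
Proof. by move=> hN h; rewrite /L (avg_eq hN) (cvg_lim (@Rhausdorff R) h). Qed.



Lemma avgN_U N (A C : set (Y X)) F : A `&` C = set0 ->
  avgN N (A `|` C) F = avgN N A F + avgN N C F.
Proof.
move=> d; rewrite /avgN -mulrDl -natrD -big_split /=; congr (_%:R / _).
by apply: eq_bigr => h _; rewrite cntN_U.
Qed.

Lemma L_add (A C : set (Y X)) : bounded A -> bounded C -> A `&` C = set0 ->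
  L (A `|` C) = L A + L C.
Proof.
move=> [N1 h1] [N2 h2] d.
have hA : forall x n, A (x, n) -> (n < N1 + N2)%N by move=> x n /h1; lia.
have hC : forall x n, C (x, n) -> (n < N1 + N2)%N by move=> x n /h2; lia.
have hAC : forall x n, (A `|` C) (x, n) -> (n < N1 + N2)%N by move=> x n [/hA|/hC].
apply: (L_eq hAC).
have c1 := L_cvgN hA; have c2 := L_cvgN hC.
move=> P /(@cvgD _ R^o _ _ _ _ _ _ _ c1 c2) h.
have h' : U ((fun F => avgN (N1 + N2) A F + avgN (N1 + N2) C F) @^-1` P) := h.
change (U (avgN (N1 + N2) (A `|` C) @^-1` P)).
by apply: filterS h' => F /=; rewrite avgN_U.
Qed.

Lemma L_cst (A : set (Y X)) N c : (forall x n, A (x, n) -> (n < N)%N) ->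
  U [set F | avgN N A F = c] -> L A = c.
Proof.
move=> hN hU; apply: (L_eq hN); apply: cvg_near_cst.
by apply: filterS hU => F.
Qed.

Lemma L_set0 : L set0 = 0.
Proof.
apply: (@L_cst _ 0%N) => //; apply: filterS (@filterT _ U _) => F _ /=.
rewrite /avgN big1 ?mul0r // => h _; exact: cntN0.
Qed.

Lemma L_E0 : L E0 = 1.
Proof.
apply: (@L_cst _ 1%N); first by move=> x n; rewrite /E0 /= => ->.
apply: filterS (UF [::] ltr01) => F [_ hF _] /=.
rewrite /avgN (eq_bigr (fun _ => 1%N)); last first.
  by move=> h _; rewrite /cntN /= /E0 /=; rewrite asboolT.
by rewrite sum1_size divff // pnatr_eq0 -lt0n.
Qed.

Lemma L_avoid (B : set (Y X)) : bounded B -> (forall h n, ~ B (alpha h x0, n)) -> L B = 0.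
Proof.
move=> [N hN] hB; apply: (@L_cst _ N) => //; apply: filterS (@filterT _ U _) => F _ /=.
rewrite /avgN big1 ?mul0r // => h _.
rewrite /cntN (@eq_count _ _ pred0) ?count_pred0 // => q; exact: asboolF.
Qed.

Lemma L_ge0 (A : set (Y X)) : bounded A -> 0 <= L A.
Proof.
move=> [N hN]; have := L_cvgN hN => h.
rewrite -(cvg_lim (@Rhausdorff R) h); apply: limr_ge; first by apply/cvg_ex; exists (L A).
by apply: filterS (@filterT _ U _) => F _; exact: avgN_ge0.
Qed.



Lemma avgN_sum N n (A : set (Y X)) (P : nat -> set (Y X)) F :
  A = \bigcup_(i in `I_n) P i -> trivIset `I_n P ->
  avgN N A F = \sum_(i < n) avgN N (P i) F.
Proof.
move=> -> tP; rewrite /avgN -mulr_suml -natr_sum; congr (_%:R / _).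
under eq_bigr do rewrite cntN_bigcup //.
by rewrite exchange_big.
Qed.

Lemma avg_img_le N g s (P : set (Y X)) F e : bijective s ->
  (forall x n, P (x, n) -> (n < N)%N) ->
  (forall x n, (tact g s @` P) (x, n) -> (n < N)%N) ->
  uniq F -> (0 < size F)%N ->
  (symdiff_card (left_translate (gi g) F) F)%:R < e * (size F)%:R ->
  `|avgN N (tact g s @` P) F - avgN N P F| <= N%:R * e.
Proof.
move=> bs hP hI uF sF hsd.
have e1 : (\sum_(h <- F) cntN N (tact g s @` P) (alpha h x0) =
    \sum_(h <- map (gm (gi g)) F) cntN N P (alpha h x0))%N.
  by rewrite big_map; apply: eq_bigr => h _; rewrite (@cntN_img N g s P (alpha h x0) bs hP hI) actM.
rewrite /avgN e1 -mulrBl normrM normfV normr_nat.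
rewrite ler_pdivrMr ?ltr0n //.
apply: (le_trans (@folner_cmp (fun h => cntN N P (alpha h x0)) N (gi g) F uF (fun h => cntN_le N P (alpha h x0)))).

by rewrite -mulrA ler_wpM2l ?ler0n //; exact: ltW.
Qed.

Lemma L_inv (A B : set (Y X)) : equidec A B -> bounded A -> bounded B -> L A = L B.
Proof.
move=> [n [P [g [s [hP AP tP BP tPi]]]]] [N1 h1] [N2 h2].
set N := (N1 + N2)%N.
have hA : forall x q, A (x, q) -> (q < N)%N by move=> x q /h1; rewrite /N; lia.
have hB : forall x q, B (x, q) -> (q < N)%N by move=> x q /h2; rewrite /N; lia.
have hPi : forall i, (i < n)%N -> forall x q, P i (x, q) -> (q < N)%N.
  by move=> i hi x q Pq; apply: (hA x); rewrite AP; exists i.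
have hIi : forall i, (i < n)%N ->
    forall x q, (tact (g i) (s i) @` P i) (x, q) -> (q < N)%N.
  by move=> i hi x q Iq; apply: (hB x); rewrite BP; exists i.
have cA := L_cvgN hA; have cB := L_cvgN hB.
have d0 : forall e, 0 < e -> U [set F | `|avgN N B F - avgN N A F| < e].
  move=> e e0.
  set K := [seq gi (g i) | i <- iota 0 n].
  set D : R := (n * N).+1%:R.
  have D0 : 0 < D by rewrite ltr0n.
  set e' := e / D.
  have e'0 : 0 < e' by rewrite divr_gt0.
  apply: filterS (UF K e'0) => F [uF sF hK] /=.
  rewrite (avgN_sum _ _ BP tPi) (avgN_sum _ _ AP tP) -sumrB.
  apply: (le_lt_trans (ler_norm_sum _ _ _)).
  apply: (@le_lt_trans _ _ (\sum_(i < n) N%:R * e')).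
    apply: ler_sum => i _; apply: avg_img_le => //.
    - exact: (hP i (ltn_ord i)).2.
    - exact: hPi.
    - exact: hIi.
    - apply: hK; apply/mapP; exists (nat_of_ord i) => //; by rewrite mem_iota leq0n add0n ltn_ord.
  rewrite sumr_const card_ord -mulr_natr.
  have et : e = e' * D by rewrite /e' divfK // gt_eqF.
  have hnN : (N%:R * n%:R < D :> R) by rewrite /D -natrM ltr_nat; lia.
  rewrite [X in _ < X]et.
  have N0 : (0 <= N%:R :> R) by rewrite ler0n.
  have n0 : (0 <= n%:R :> R) by rewrite ler0n.
  nra.
case: (eqVneq (L B - L A) 0) => [/eqP|hne].
  by rewrite subr_eq0 => /eqP ->.
exfalso.
set e := `|L B - L A| / 3%:R.
have e0 : 0 < e by rewrite divr_gt0 ?normr_gt0 // ltr0n.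
have uA := proj1 (@cvgrPdist_lt _ R^o _ _ _ _ _) cA e e0.
have uB := proj1 (@cvgrPdist_lt _ R^o _ _ _ _ _) cB e e0.
have [F [[hFA hFB] hFd]] := filter_ex (filterI (filterI (uA _) (uB _)) (d0 e e0)).
move: hFA hFB hFd => /=.
rewrite !ltr_norml => /andP [a1 a2] /andP [b1 b2] /andP [c1 c2].
have : `|L B - L A| < 3%:R * e.
  by rewrite ltr_norml; apply/andP; split; lra.
rewrite /e mulrC divfK ?pnatr_eq0 //.
by rewrite ltxx.
Qed.

End Measure.

Lemma backward (hcpt : compact [set: X]) (hamen : amenable_group G) b :
  inT b -> (forall mu, Mstate alpha mu -> (0 < mu b)%E) -> order_unit alpha b.
Proof.
move=> [B0 [bB0 ->]] hmu.
have [N hN] := bB0.2.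
pose V (g : G) : set X := [set x | exists n, B0 (alpha g x, n)].
have oV : forall g, open (V g).
  move=> g; have -> : V g = alpha g @^-1` (\bigcup_(n in setT) slice B0 n).
    by apply/seteqP; split => x [n] => [Bn|_ Bn]; exists n.
  apply: (proj1 (continuousP _) (@actC g)); apply: bigcup_open => n _.
  by move: bB0 => [/clopen_sliceP h _]; exact: (h n).1.
case: (dichotomy hcpt oV) => [[l cov]|[x0 hx0]].
  exact: (order_unit_cover bB0 hN cov).
exfalso.
pose D := [set Ke : seq G * R | (0 < Ke.2)%R].
pose FolF := filter_from D (fun Ke => Sfol Ke.1 Ke.2).
have FF : Filter FolF.
  apply: filter_from_filter; first by exists ([::], 1%R) => /=; exact: ltr01.
  move=> [K1 e1] [K2 e2] /= h1 h2; exists (K1 ++ K2, Num.min e1 e2).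
    by rewrite /D /= lt_min h1 h2.
  move=> F [uF sF hK] /=; split; split => // k hk.
    apply: (lt_le_trans (hK k _)); first by rewrite mem_cat hk.
    by rewrite ler_wpM2r ?ler0n // ge_min lexx.
  apply: (lt_le_trans (hK k _)); first by rewrite mem_cat hk orbT.
  by rewrite ler_wpM2r ?ler0n // ge_min lexx orbT.
have PF : ProperFilter FolF.
  apply: filter_from_proper => -[K e] /= e0.
  by have [F hF] := hamen K e e0; exists F.
have [U [UU sU]] := ultraFilterLemma PF.
have UF : forall (K : seq G) (e : R), (0 < e)%R -> U (Sfol K e).
  by move=> K e e0; apply: sU; exists (K, e).
pose mu (a : set (set (Y X))) : \bar R := (L x0 U (xget set0 a))%:E.
have rep : forall A, bclopen A -> L x0 U (xget set0 (cls A)) = L x0 U A.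
  move=> A bA; have := @xgetI _ set0 (cls A) A (cls_self bA).
  move=> [[_ bR] eR]; apply: esym; apply: L_inv => //; exact: bA.2.
have smu : Mstate alpha mu.
  split; last by rewrite /mu (rep _ bclopenE0) L_E0.
  split.
  - move=> a [A [bA ->]]; rewrite /mu (rep _ bA) lee_fin.
    exact: L_ge0 bA.2.
  - by rewrite /mu /Defs.tzero (rep _ bclopen0) L_set0.
  - move=> a c ha hc; have [A [C [bA bC dAC [-> -> ->]]]] := tadd_rep ha hc.
    rewrite /mu (rep _ (bclopenU bA bC)) (rep _ bA) (rep _ bC).
    by rewrite (L_add _ _ bA.2 bC.2 dAC).
have := hmu _ smu.
rewrite /mu (rep _ bB0) (@L_avoid x0 U UU B0 bB0.2) ?lte_fin ?ltxx //.
by move=> h n Bn; apply: (hx0 h); exists n.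
Qed.

End Main.

Theorem lemmal (G : groupType) (X : topologicalType) (alpha : G -> X -> X)
  (hcount : countable_group G) (hamen : amenable_group G)
  (hcpt : compact [set: X]) (hT2 : hausdorff_space X) (h0 : clopen_base X)
  (hact : is_action alpha) (b : set (set (Y X))) (hb : inT alpha b) :
  order_unit alpha b <-> (forall mu, Mstate alpha mu -> (0 < mu b)%E).
Proof.
split.
  by move=> ou mu hmu; exact: (forward hact hb ou hmu).
exact: (backward hact hcpt hamen hb).
Qed.
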